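(* Let $D=(V,A)$ be a digraph, $k\in\mathbb{N}$, and $\mathcal{B}_i=(V_i,A_i)$ $(i<k)$ pairwise edge-disjoint branchings in $D$ such that for every nonempty $X\subseteq V$, $\varrho_{D\setminus\!\setminus\mathcal{B}}(X)\geq|\{i<k:V_i\cap X=\varnothing\}|$. Let $B\subseteq V$ be dangerous. Then for every $w\in B$ there is a path $R$ going from $V_0\cap B$ to $w$ in the subgraph $(D\setminus\!\setminus\mathcal{B})[B]$ spanned by $B$.
   Context: Digraphs may be of arbitrary cardinality with multiple edges. A branching is a digraph whose weakly connected components are arborescences (directed trees in which every vertex is reachable from the root). $D\setminus\!\setminus\mathcal{B}=(V,A\setminus\bigcup_{i<k}A_i)$. $\varrho_H(X)$ is the cardinality of the set of edges of $H$ with tail outside $X$ and head in $X$. A nonempty set $X\subseteq V$ is tight if $\varrho_{D\setminus\!\setminus\mathcal{B}}(X)=|\{i<k:V_i\cap X=\varnothing\}|$, and dangerous if it is tight and $X\cap V_0\neq\varnothing$. Paths are directed simple paths; a path $P$ goes from $X$ to $Y$ if $V(P)\cap X=\{\mathrm{start}(P)\}$ and $V(P)\cap Y=\{\mathrm{end}(P)\}$ (start and end may coincide). *)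

(* Defs.v *)
(* Digraphs of arbitrary cardinality with multiple edges:
   a vertex type V, an edge type A, and tail/head maps tl hd : A -> V.
   Subsets are predicates (V -> Prop), (A -> Prop). *)
From Stdlib Require Import List Arith ClassicalEpsilon.
Import ListNotations.
Set Implicit Arguments.

Section Digraph.
Variables (V A : Type) (tl hd : A -> V).

Fixpoint walk (H : A -> Prop) (x : V) (es : list A) (y : V) : Prop :=
  match es with
  | nil => x = y
  | e :: es' => H e /\ tl e = x /\ walk H (hd e) es' y
  end.

Definition walk_verts (x : V) (es : list A) : list V := x :: map hd es.

(* (Vi, Ai) is a branching in D: a subgraph whose weakly connected components
   are arborescences, i.e. every vertex has in-degree <= 1 and every vertex is
   reachable from a root (a vertex of in-degree 0) by a finite directed walk. *)
Definition is_branching (Vi : V -> Prop) (Ai : A -> Prop) : Prop :=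
  (forall e, Ai e -> Vi (tl e) /\ Vi (hd e)) /\
  (forall e1 e2, Ai e1 -> Ai e2 -> hd e1 = hd e2 -> e1 = e2) /\
  (forall v, Vi v -> exists r, Vi r /\ (forall e, Ai e -> hd e <> r) /\
                          exists es, walk Ai r es v).

(* edge set of D \\ B : edges of D in none of the A_i, i < k *)
Definition residual (k : nat) (As : nat -> A -> Prop) (e : A) : Prop :=
  forall i, i < k -> ~ As i e.

Definition enters (H : A -> Prop) (X : V -> Prop) (e : A) : Prop :=
  H e /\ ~ X (tl e) /\ X (hd e).

Definition rho_ge (H : A -> Prop) (X : V -> Prop) (n : nat) : Prop :=
  exists f : nat -> A,
    (forall i j, i < n -> j < n -> f i = f j -> i = j) /\
    (forall i, i < n -> enters H X (f i)).

Definition rho_eq (H : A -> Prop) (X : V -> Prop) (n : nat) : Prop :=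
  exists f : nat -> A,
    (forall i j, i < n -> j < n -> f i = f j -> i = j) /\
    (forall i, i < n -> enters H X (f i)) /\
    (forall e, enters H X e -> exists i, i < n /\ f i = e).

Definition missing (k : nat) (Vs : nat -> V -> Prop) (X : V -> Prop) : nat :=
  length (filter (fun i =>
    if excluded_middle_informative (forall v, Vs i v -> ~ X v) then true else false)
    (seq 0 k)).

Definition tight (k : nat) (Vs : nat -> V -> Prop) (As : nat -> A -> Prop)
  (X : V -> Prop) : Prop :=
  (exists v, X v) /\ rho_eq (residual k As) X (missing k Vs X).

Definition dangerous (k : nat) (Vs : nat -> V -> Prop) (As : nat -> A -> Prop)
  (X : V -> Prop) : Prop :=
  tight k Vs As X /\ exists v, X v /\ Vs 0 v.

Definition induced (H : A -> Prop) (B : V -> Prop) (e : A) : Prop :=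
  H e /\ B (tl e) /\ B (hd e).

Definition path_from_to (H : A -> Prop) (X Y : V -> Prop) (x : V) (es : list A)
  (y : V) : Prop :=
  walk H x es y /\ NoDup (walk_verts x es) /\
  (forall v, In v (walk_verts x es) -> X v -> v = x) /\
  (forall v, In v (walk_verts x es) -> Y v -> v = y) /\
  X x /\ Y y.

End Digraph.

(* Main.v *)
Require Import Defs.
From Stdlib Require Import List Arith.
From Stdlib Require Import Classical Lia ClassicalEpsilon.
Import ListNotations.
Set Implicit Arguments.
Unset Strict Implicit.

Section Aux.
Variables (V A : Type) (tl hd : A -> V) (H : A -> Prop).

Lemma walk_app x es1 y es2 z :
  walk tl hd H x es1 y -> walk tl hd H y es2 z -> walk tl hd H x (es1 ++ es2) z.
Proof.
  revert x; induction es1 as [|e es IH]; simpl; intros x h1 h2.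
  - subst; auto.
  - destruct h1 as [a [b c]]; repeat split; eauto.
Qed.

Lemma walk_snoc x es y e :
  walk tl hd H x es y -> H e -> tl e = y -> walk tl hd H x (es ++ [e]) (hd e).
Proof. intros h he ht. eapply walk_app; eauto. simpl; auto. Qed.

Lemma walk_split x es y v : walk tl hd H x es y -> In v (walk_verts hd x es) ->
  exists es1 es2, es = es1 ++ es2 /\ walk tl hd H x es1 v /\ walk tl hd H v es2 y.
Proof.
  revert x; induction es as [|e es IH]; simpl; intros x hw hv.
  - destruct hv as [hv|[]]; subst. exists [], []; simpl; auto.
  - destruct hw as [a [b c]]. destruct hv as [hv|hv].
    + subst. exists [], (e::es); simpl; auto.
    + destruct (IH (hd e) c hv) as [es1 [es2 [h1 [h2 h3]]]].
      exists (e::es1), es2; simpl; subst; auto.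
Qed.

Lemma walk_simplify n : forall x es y, length es < n -> walk tl hd H x es y ->
  exists es', walk tl hd H x es' y /\ length es' <= length es /\
    NoDup (walk_verts hd x es') /\ incl (walk_verts hd x es') (walk_verts hd x es).
Proof.
  induction n as [|n IH]; intros x es y hl hw; [lia|].
  destruct es as [|e es].
  - exists []; simpl in *; repeat split; auto using incl_refl.
    constructor; [intros []|constructor].
  - destruct (classic (In x (map hd (e::es)))) as [hin|hnin].
    + simpl in hw. destruct hw as [a [b c]].
      assert (hv : In x (walk_verts hd (hd e) es)).
      { simpl in hin. destruct hin as [h|h]; [left; auto|right; auto]. }
      destruct (walk_split c hv) as [es1 [es2 [h1 [h2 h3]]]]. subst es.
      destruct (IH x es2 y) as [es' [w' [l' [nd' inc']]]]; auto.
      { simpl in hl. rewrite length_app in hl. lia. }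
      exists es'; repeat split; auto.
      * simpl. rewrite length_app. lia.
      * intros u hu. apply inc' in hu. simpl in hu |- *.
        destruct hu as [hu|hu]; [left; auto|right; right].
        rewrite map_app, in_app_iff; auto.
    + simpl in hw. destruct hw as [a [b c]].
      destruct (IH (hd e) es y) as [es' [w' [l' [nd' inc']]]]; auto.
      { simpl in hl; lia. }
      exists (e :: es'); split; [simpl; auto|split; [simpl; lia|split]].
      * simpl. constructor. 2: exact nd'. intros h. apply hnin. apply inc' in h. exact h.
      * simpl. intros u [hu|hu]; [left; auto|]. right. apply inc' in hu. exact hu.
Qed.

Lemma min_exists (P : nat -> Prop) : (exists n, P n) ->
  exists n, P n /\ forall m, m < n -> ~ P m.
Proof.
  intros [n hn]. revert hn. induction n as [n IH] using lt_wf_ind. intros hn.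
  destruct (classic (exists m, m < n /\ P m)) as [[m [hm pm]]|hno].
  - apply (IH m hm pm).
  - exists n; split; auto. intros m hm pm; apply hno; eauto.
Qed.

End Aux.

Lemma filter_len_le {T} (l : list T) (p q : T -> bool) :
  (forall i, In i l -> p i = true -> q i = true) ->
  length (filter p l) <= length (filter q l).
Proof.
  induction l as [|a l IH]; simpl; intros h; auto.
  destruct (p a) eqn:E1.
  - rewrite (h a (or_introl eq_refl) E1). simpl. apply le_n_S, IH; auto.
  - destruct (q a); simpl; [apply le_S|]; apply IH; auto.
Qed.

Theorem proposition2 (V A : Type) (tl hd : A -> V) (k : nat)
  (Vs : nat -> V -> Prop) (As : nat -> A -> Prop)
  (hk : 0 < k)
  (Hbr : forall i, i < k -> is_branching tl hd (Vs i) (As i))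
  (Hdisj : forall i j e, i < k -> j < k -> i <> j -> As i e -> As j e -> False)
  (Hcut : forall X : V -> Prop, (exists v, X v) ->
            rho_ge tl hd (residual k As) X (missing k Vs X))
  (B : V -> Prop) (HB : dangerous tl hd k Vs As B) :
  forall w, B w ->
    exists x es, path_from_to tl hd (induced tl hd (residual k As) B)
                   (fun v => Vs 0 v /\ B v) (fun v => v = w) x es w.
Proof.
  intros w hw.
  set (H := induced tl hd (residual k As) B).
  set (Y := fun v => exists x es, Vs 0 x /\ B x /\ walk tl hd H x es v).
  assert (hY : Y w).
  { apply NNPP; intros hnY.
    set (Z := fun v => B v /\ ~ Y v).
    destruct HB as [[_ [f [finj [fent fall]]]] [v0 [bv0 vv0]]].
    destruct (Hcut Z (ex_intro _ w (conj hw hnY))) as [g [ginj gent]].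
    assert (hZB : forall e, enters tl hd (residual k As) Z e ->
                            enters tl hd (residual k As) B e).
    { intros e [hr [hnt [hbh hny]]]. repeat split; auto.
      intros hbt. apply hny.
      assert (Y (tl e)) as [x [es [h1 [h2 h3]]]].
      { apply NNPP; intro; apply hnt; split; auto. }
      exists x, (es ++ [e]); repeat split; auto.
      eapply walk_snoc; [exact h3| |reflexivity]. split; auto. }
    set (m := missing k Vs Z) in *.
    set (n := missing k Vs B) in *.
    assert (hmn : m <= n).
    { assert (L : length (map g (seq 0 m)) <= length (map f (seq 0 n))).
      { apply NoDup_incl_length.
        - apply NoDup_map_NoDup_ForallPairs; [|apply seq_NoDup].
          intros a b ha hb. apply in_seq in ha; apply in_seq in hb.
          apply ginj; lia.
        - intros e he. apply in_map_iff in he. destruct he as [i [<- hi]].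
          apply in_seq in hi.
          destruct (fall (g i)) as [j [hj hfj]]; [apply hZB, gent; lia|].
          apply in_map_iff. exists j; split; auto. apply in_seq; lia. }
      rewrite !length_map, !length_seq in L. exact L. }
    assert (hnm : n < m).
    { unfold m, n, missing.
      destruct k as [|k']; [lia|]. simpl.
      destruct (excluded_middle_informative (forall v, Vs 0 v -> ~ B v)) as [c|c].
      { exfalso; eapply c; eauto. }
      destruct (excluded_middle_informative (forall v, Vs 0 v -> ~ Z v)) as [c'|c'].
      2:{ exfalso; apply c'. intros v hv [hb hny]. apply hny.
          exists v, []; simpl; auto. }
      simpl. apply le_n_S. apply filter_len_le.
      intros i _.
      destruct (excluded_middle_informative (forall v, Vs i v -> ~ B v)) as [d|d];
      [|discriminate].
      destruct (excluded_middle_informative (forall v, Vs i v -> ~ Z v)) as [d'|d'];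
      auto. exfalso; apply d'. intros v hv [hb _]. eapply d; eauto. }
    lia. }
  destruct (@min_exists (fun n => exists x es, Vs 0 x /\ B x /\
              walk tl hd H x es w /\ length es = n)) as [n [[x [es [h0 [hb [hwk hl]]]]] hmin]].
  { destruct hY as [x [es [a [b c]]]]. exists (length es), x, es; auto. }
  destruct (walk_simplify (n:=S (length es)) (Nat.lt_succ_diag_r _) hwk)
    as [es' [w' [l' [nd' _]]]].
  assert (hl' : length es' = n).
  { destruct (Nat.lt_ge_cases (length es') n) as [c|c]; [|lia].
    exfalso. apply (hmin _ c). exists x, es'; auto. }
  exists x, es'. unfold path_from_to. repeat split; auto.
  intros v hv [hv0 hvb].
  destruct (walk_split w' hv) as [es1 [es2 [e [h1 h2]]]].
  destruct es1 as [|e1 es1].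
  - simpl in h1; auto.
  - exfalso. apply (hmin (length es2)).
    + subst es'. simpl in hl'. rewrite length_app in hl'. lia.
    + exists v, es2; auto.
Qed.
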